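(* Let $\eta>0$ and $\beta\in(1,2]$, and let $\lambda(n)=1-\exp\left[-\left(\frac{n}{\eta}\right)^\beta+\left(\frac{n-1}{\eta}\right)^\beta\right]$ for integers $n\geq 1$ be the hazard function of the Weibull-1 distribution $\mathrm{W}_1(\eta,\beta)$. Then $\lambda$ is a concave function of $n$, i.e. its second-order discrete derivative satisfies $\lambda(n)-2\lambda(n-1)+\lambda(n-2)\leq 0$ for every integer $n\geq 3$.
   Context: The Weibull-1 (Type I discrete Weibull) distribution $\mathrm{W}_1(\eta,\beta)$, with $\eta>0,\beta>0$, is the distribution of a random variable $N$ with values in $\{1,2,\dots\}$ and survival function $S(n)=\mathbb{P}[N>n]=\exp[-(n/\eta)^\beta]$ for integers $n\ge 0$. Its hazard function is $\lambda(n)=\mathbb{P}[N=n\mid N>n-1]$, which equals the formula given in the claim. For a function $\lambda$ on the integers, its second-order discrete derivative at $n$ is $\lambda''(n)=\lambda(n)-2\lambda(n-1)+\lambda(n-2)$, and concavity means this is nonpositive. *)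

(* Defs.v *)
From Stdlib Require Import Reals.
Open Scope R_scope.

(* x ^ beta for x >= 0 (real exponent), with the convention 0 ^ beta = 0 (beta > 0). *)
Definition rpow (x b : R) : R := if Rle_dec x 0 then 0 else Rpower x b.

Definition weibull1_hazard (eta beta : R) (n : nat) : R :=
  1 - exp (- rpow (INR n / eta) beta + rpow ((INR n - 1) / eta) beta).

(* Main.v *)
Require Import Defs.
From Stdlib Require Import Reals Lra Lia.
From Coquelicot Require Import Coquelicot.
Open Scope R_scope.

Lemma rpow_pos x b : 0 < x -> rpow x b = Rpower x b.
Proof. intros H. unfold rpow. destruct (Rle_dec x 0); [lra|reflexivity]. Qed.

Lemma der_shift (p c y : R) : 0 < y + c ->
  is_derive (fun t => rpow (t + c) p) y (p * Rpower (y + c) (p - 1)).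
Proof.
  intros H.
  apply is_derive_ext_loc with (f := fun t => exp (p * ln (t + c))).
  - apply locally_interval with (a := Finite (- c)) (b := p_infty); simpl; try lra; try easy.
    intros t Ht _. rewrite rpow_pos by lra. reflexivity.
  - replace (p * Rpower (y + c) (p - 1)) with (p * (1 * / (y+c)) * exp (p * ln (y+c))).
    + auto_derive. lra. reflexivity.
    + unfold Rpower. replace ((p-1) * ln (y+c)) with (p * ln (y+c) + - ln (y+c)) by ring.
      rewrite exp_plus, exp_Ropp, exp_ln by lra. field. lra.
Qed.

Lemma der2_shift (p c y : R) : 0 < y + c ->
  is_derive (fun t => Rpower (t + c) (p-1)) y ((p-1) * Rpower (y + c) (p - 2)).
Proof.
  intros H.
  apply is_derive_ext_loc with (f := fun t => exp ((p-1) * ln (t + c))).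
  - apply locally_interval with (a := Finite (- c)) (b := p_infty); simpl; try lra; try easy.
  - replace ((p-1) * Rpower (y + c) (p - 2)) with ((p-1) * (1 * / (y+c)) * exp ((p-1) * ln (y+c))).
    + auto_derive. lra. reflexivity.
    + unfold Rpower. replace ((p-2) * ln (y+c)) with ((p-1) * ln (y+c) + - ln (y+c)) by ring.
      rewrite exp_plus, exp_Ropp, exp_ln by lra. field. lra.
Qed.


Lemma Rpower_anti (q y1 y2 : R) : q <= 0 -> 0 < y1 <= y2 -> Rpower y2 q <= Rpower y1 q.
Proof.
  intros Hq Hy. unfold Rpower.
  assert (ln y1 <= ln y2).
  { destruct (Rle_lt_or_eq_dec _ _ (proj2 Hy)) as [h|h].
    - left. apply ln_increasing; lra.
    - rewrite h; lra. }
  assert (q * ln y2 <= q * ln y1) by nra.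
  destruct (Rle_lt_or_eq_dec _ _ H0) as [h|h].
  - left. apply exp_increasing; lra.
  - rewrite h; lra.
Qed.

Lemma cont_of_der (f : R -> R) (x l : R) : is_derive f x l -> continuity_pt f x.
Proof.
  intros H. apply continuity_pt_filterlim. apply (ex_derive_continuous (K:=R_AbsRing) (V:=R_NormedModule)). exists l. exact H.
Qed.

Definition gg p h y := Rpower (y + h) (p - 1) - Rpower (y + 0) (p - 1).

Lemma gg_anti p h y1 y2 : 1 < p -> p <= 2 -> 0 < h -> 0 < y1 <= y2 -> gg p h y2 <= gg p h y1.
Proof.
  intros Hp1 Hp Hh Hy.
  assert (Hd : forall y, 0 < y -> is_derive (gg p h) y
     ((p-1) * Rpower (y + h) (p - 2) - (p-1) * Rpower (y + 0) (p - 2))).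
  { intros y Hy0. unfold gg. apply (is_derive_minus (fun t => Rpower (t + h) (p - 1))
      (fun t => Rpower (t + 0) (p - 1))); apply der2_shift; lra. }
  destruct (MVT_gen (gg p h) y1 y2
     (fun y => (p-1) * Rpower (y + h) (p - 2) - (p-1) * Rpower (y + 0) (p - 2))) as [c [Hc E]].
  - rewrite Rmin_left, Rmax_right by lra. intros x Hx. apply Hd. lra.
  - rewrite Rmin_left, Rmax_right by lra. intros x Hx. eapply cont_of_der. apply Hd. lra.
  - rewrite Rmin_left, Rmax_right in Hc by lra.
    assert (Rpower (c + h) (p - 2) <= Rpower (c + 0) (p - 2)) by (apply Rpower_anti; lra).
    assert (0 <= (p-1) * (Rpower (c + 0) (p - 2) - Rpower (c + h) (p - 2))).
    { apply Rmult_le_pos; lra. }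
    nra.
Qed.

Lemma plusR (a b : R) : plus a b = a + b. Proof. reflexivity. Qed.
Lemma minusR (a b : R) : minus a b = a - b. Proof. reflexivity. Qed.
Lemma oppR (a : R) : opp a = - a. Proof. reflexivity. Qed.

Lemma is_derive_eq (f : R -> R) x l l' : is_derive f x l -> l = l' -> is_derive f x l'.
Proof. intros H ->; exact H. Qed.

Lemma rpow_cont0 p : 1 < p -> continuity_pt (fun t => rpow (t + 0) p) 0.
Proof.
  intros Hp. unfold continuity_pt, continue_in, limit1_in, limit_in; simpl; unfold R_dist.
  intros eps He. exists (Rmin 1 eps). split. { apply Rmin_pos; lra. }
  intros x [_ Hx].
  replace (0+0) with 0 by ring. unfold rpow at 2. destruct (Rle_dec 0 0); [|lra].
  rewrite Rminus_0_r in *. rewrite Rplus_0_r.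
  assert (Hm1 := Rmin_l 1 eps). assert (Hm2 := Rmin_r 1 eps).
  unfold rpow. destruct (Rle_dec x 0).
  - rewrite Rabs_R0; lra.
  - assert (0 < x) by lra.
    rewrite Rabs_pos_eq in Hx by lra.
    assert (Rpower x p <= x).
    { rewrite <- (Rpower_1 x) at 2 by lra. unfold Rpower.
      assert (ln x < 0). { rewrite <- ln_1. apply ln_increasing; lra. }
      left. apply exp_increasing. nra. }
    rewrite Rabs_pos_eq. lra. unfold Rpower. left; apply exp_pos.
Qed.

Definition DD p h y := rpow (y + 2*h) p - 2 * rpow (y + h) p + rpow (y + 0) p.

Lemma DD_anti p h x : 1 < p -> p <= 2 -> 0 < h -> 0 <= x -> DD p h (x + h) <= DD p h x.
Proof.
  intros Hp1 Hp2 Hh Hx.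
  set (df := fun y => if Rle_dec y 0 then 0 else
     p * Rpower (y + 2*h) (p - 1) - 2 * (p * Rpower (y + h) (p - 1)) + p * Rpower (y + 0) (p - 1)).
  assert (Hd : forall y, 0 < y -> is_derive (DD p h) y
     (p * Rpower (y + 2*h) (p - 1) - 2 * (p * Rpower (y + h) (p - 1)) + p * Rpower (y + 0) (p - 1))).
  { intros y Hy. unfold DD.
    assert (H1 := der_shift p (2*h) y ltac:(lra)).
    assert (H2 := is_derive_scal _ _ 2 _ (der_shift p h y ltac:(lra))).
    assert (H3 := der_shift p 0 y ltac:(lra)).
    assert (H := is_derive_plus _ _ _ _ _ (is_derive_minus _ _ _ _ _ H1 H2) H3).
    simpl in H.
    eapply is_derive_ext; [|eapply is_derive_eq; [exact H|]].
    - intros t. reflexivity.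
    - match goal with |- ?a = ?b => change (@eq R a b) end. rewrite plusR, minusR. ring. }
  destruct (MVT_gen (DD p h) x (x + h) df) as [c [Hc E]].
  - rewrite Rmin_left, Rmax_right by lra. intros y Hy. unfold df.
    destruct (Rle_dec y 0); [lra|]. apply Hd; lra.
  - rewrite Rmin_left, Rmax_right by lra. intros y Hy.
    destruct (Rle_lt_or_eq_dec 0 y) as [Hy0|Hy0]; [lra| |].
    + eapply cont_of_der. apply Hd. exact Hy0.
    + subst y. unfold DD.
      apply continuity_pt_plus; [apply continuity_pt_minus|].
      * eapply cont_of_der. apply der_shift. lra.
      * apply continuity_pt_scal. eapply cont_of_der. apply der_shift. lra.
      * apply rpow_cont0; lra.
  - assert (df c <= 0).
    { unfold df. destruct (Rle_dec c 0); [lra|].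
      assert (gg p h (c + h) <= gg p h c) by (apply gg_anti; lra).
      unfold gg in H. replace (c + h + h) with (c + 2*h) in H by ring.
      replace (c + h + 0) with (c + h) in H by ring. nra. }
    nra.
Qed.

Lemma amgm_exp u v w : u + v <= 2 * w -> 2 * exp (- w) <= exp (- u) + exp (- v).
Proof.
  intros H.
  set (s := - (u + v) / 2). set (t := (v - u) / 2).
  assert (Eu : - u = s + t) by (unfold s, t; field).
  assert (Ev : - v = s + - t) by (unfold s, t; field).
  rewrite Eu, Ev, !exp_plus, (exp_Ropp t).
  assert (exp (- w) <= exp s).
  { destruct (Rle_lt_or_eq_dec (-w) s) as [h|h]. unfold s; lra.
    left; apply exp_increasing; lra. rewrite h; lra. }
  assert (Et := exp_pos t). assert (Es := exp_pos s).
  assert (exp t + / exp t >= 2).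
  { apply Rminus_ge. replace (exp t + / exp t - 2) with ((exp t - 1)^2 / exp t) by (field; lra).
    apply Rle_ge. apply Rmult_le_pos. apply pow2_ge_0. left; apply Rinv_0_lt_compat; lra. }
  assert (exp s * (exp t + / exp t) >= exp s * 2) by (apply Rle_ge; apply Rmult_le_compat_l; lra). rewrite Rmult_plus_distr_l in *. lra.
Qed.

Theorem proposition1 (eta beta : R) (heta : 0 < eta) (hb1 : 1 < beta) (hb2 : beta <= 2)
  (n : nat) (hn : (3 <= n)%nat) :
  weibull1_hazard eta beta n - 2 * weibull1_hazard eta beta (n - 1)
    + weibull1_hazard eta beta (n - 2) <= 0.
Proof.
  destruct n as [|[|[|k]]]; try (exfalso; lia).
  replace (S (S (S k)) - 1)%nat with (S (S k)) by lia.
  replace (S (S (S k)) - 2)%nat with (S k) by lia.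
  unfold weibull1_hazard. rewrite !S_INR.
  set (K := INR k). assert (HK : 0 <= K) by apply pos_INR.
  set (h := / eta). set (x := K / eta).
  assert (Hh : 0 < h) by (apply Rinv_0_lt_compat; lra).
  assert (Hx : 0 <= x) by (unfold x, Rdiv; apply Rmult_le_pos; [lra | left; apply Rinv_0_lt_compat; lra]).
  assert (E3 : (K + 1 + 1 + 1) / eta = x + h + 2 * h) by (unfold x, h; field; lra).
  assert (E2 : (K + 1 + 1 + 1 - 1) / eta = x + h + h) by (unfold x, h; field; lra).
  assert (E2' : (K + 1 + 1) / eta = x + h + h) by (unfold x, h; field; lra).
  assert (E1 : (K + 1 + 1 - 1) / eta = x + h + 0) by (unfold x, h; field; lra).
  assert (E1' : (K + 1) / eta = x + h + 0) by (unfold x, h; field; lra).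
  assert (E0 : (K + 1 - 1) / eta = x + 0) by (unfold x, h; field; lra).
  rewrite E3, E2, E2', E1, E1', E0.
  assert (HD := DD_anti beta h x hb1 hb2 Hh Hx). unfold DD in HD.
  replace (x + h + 2 * h) with (x + h + 2 * h) in HD by ring.
  replace (x + 2 * h) with (x + h + h) in HD by ring.
  rewrite (Rplus_0_r (x + h)) in HD |- *.
  set (a3 := rpow (x + h + 2 * h) beta) in *.
  set (a2 := rpow (x + h + h) beta) in *.
  set (a1 := rpow (x + h) beta) in *.
  set (a0 := rpow (x + 0) beta) in *.
  assert (A := amgm_exp (a1 - a0) (a3 - a2) (a2 - a1) ltac:(lra)).
  replace (- a3 + a2) with (- (a3 - a2)) by ring.
  replace (- a2 + a1) with (- (a2 - a1)) by ring.
  replace (- a1 + a0) with (- (a1 - a0)) by ring.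
  lra.
Qed.
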